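(* Let $G=(V,E)$ be a finite simple graph which is $S_{1,1,5}$-free, $K_4$-free, diamond-free and butterfly-free. Let $xy\in E$ and let $r$ be a vertex with $rx\in E$ and $ry\notin E$. For $i\ge 1$ let $N_i=\{z\in V:\operatorname{dist}_G(z,\{x,y\})=i\}$. Assume $N_2$ is an independent set and every vertex of $N_3$ has exactly one neighbor in $N_2$. If $|N_2|\ge 5$ and $N_5\ne\emptyset$, then $G[N_5]$ contains neither an induced path on three vertices nor a triangle.
   Context: $S_{1,1,5}$ is the tree with a center $u$ adjacent to $a$, $b$ and $z_1$, where $u,z_1,\dots,z_5$ is an induced path, and no other edges. A diamond is $K_4$ minus one edge; a butterfly consists of two disjoint edges (inducing $2K_2$) together with a vertex adjacent to all four of their endpoints. $\operatorname{dist}_G(z,\{x,y\})$ is the minimum of the distances from $z$ to $x$ and to $y$. *)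

(* Defs.v *)
From mathcomp Require Import all_boot.
Set Implicit Arguments. Unset Strict Implicit. Unset Printing Implicit Defensive.

(* A finite simple graph: vertex type T : finType, adjacency e : rel T,
   required symmetric and irreflexive in the theorem. *)

Definition has_induced (T : finType) (e : rel T) (n : nat) (h : rel 'I_n) : Prop :=
  exists f : 'I_n -> T, injective f /\
    forall i j : 'I_n, i != j -> e (f i) (f j) = h i j.

Definition induced_free (T : finType) (e : rel T) (n : nat) (h : rel 'I_n) : Prop :=
  ~ has_induced e h.

Definition graph_of {n : nat} (E : seq (nat * nat)) : rel 'I_n :=
  fun i j => ((nat_of_ord i, nat_of_ord j) \in E) || ((nat_of_ord j, nat_of_ord i) \in E).

(* S_{1,1,5}: 0 = u, 1 = a, 2 = b, 3..7 = z1..z5 *)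
Definition S115 : rel 'I_8 :=
  graph_of [:: (0,1); (0,2); (0,3); (3,4); (4,5); (5,6); (6,7)].
Definition K4 : rel 'I_4 := graph_of [:: (0,1); (0,2); (0,3); (1,2); (1,3); (2,3)].
Definition diamond : rel 'I_4 := graph_of [:: (0,1); (0,2); (0,3); (1,2); (1,3)].
Definition butterfly : rel 'I_5 :=
  graph_of [:: (0,1); (0,2); (0,3); (0,4); (1,2); (3,4)].

Definition dist_le (T : finType) (e : rel T) (S : {set T}) (z : T) (k : nat) : bool :=
  [exists j : 'I_k.+1, exists p : j.-tuple T, path e z p && (last z p \in S)].

Definition Nlayer (T : finType) (e : rel T) (x y : T) (i : nat) : {set T} :=
  [set z | dist_le e [set x; y] z i && ~~ dist_le e [set x; y] z i.-1].

(* Main.v *)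
Require Import Defs.
From mathcomp Require Import all_boot.
Set Implicit Arguments. Unset Strict Implicit. Unset Printing Implicit Defensive.

Definition hn (E : seq (nat * nat)) (i j : nat) : bool := ((i, j) \in E) || ((j, i) \in E).
Definition sepn n E (i j : nat) : bool :=
  hn E i j || has (fun k => (k != i) && (k != j) && (hn E i k != hn E j k)) (iota 0 n).
Definition check n E (tw : rel nat) : bool :=
  all (fun i => all (fun j => (i == j) || tw i j || sepn n E i j) (iota 0 n)) (iota 0 n).

Section G.
Variables (T : finType) (e : rel T).
Hypotheses (e_sym : symmetric e) (e_irr : irreflexive e).

Lemma mk_induced n E (vs : seq T) d (tw : rel nat) :
  size vs = n ->
  (forall i j, i < n -> j < n -> i != j -> e (nth d vs i) (nth d vs j) = hn E i j) ->
  (forall i j, tw i j -> nth d vs i != nth d vs j) ->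
  check n E tw ->
  has_induced e (@graph_of n E).
Proof.
move=> sz P tws ch; exists (fun i : 'I_n => nth d vs i); split; last first.
  by move=> i j ij; rewrite P.
move=> [i Hi] [j Hj] /= Eij; apply/val_inj => /=; apply/eqP; apply: contraT => ij.
have /allP /(_ i) := ch; rewrite mem_iota /= Hi => /(_ isT) /allP /(_ j).
rewrite mem_iota /= Hj (negbTE ij) /= => /(_ isT) /orP[/tws|].
  by rewrite Eij eqxx.
case/orP=> [hij|/hasP[k]].
  by move: (P i j Hi Hj ij); rewrite Eij e_irr hij.
rewrite mem_iota /= => Hk /andP[/andP[ki kj]].
by rewrite -(P i k Hi Hk) ?(eq_sym i) // -(P j k Hj Hk) ?(eq_sym j) // Eij eqxx.
Qed.

Ltac simp_rhs := match goal with |- _ = ?r => let r' := eval vm_compute in r in change r with r' end.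
Ltac edge_tac := match goal with
  | |- e ?p ?q = true => first [ assumption | rewrite e_sym; assumption ]
  | |- e ?p ?q = false => apply/negbTE; first [ assumption | rewrite e_sym; assumption ]
  end.

Lemma noS115 (hf : induced_free e S115) u a b z1 z2 z3 z4 z5 :
  a != b ->
  e u a -> e u b -> e u z1 -> e z1 z2 -> e z2 z3 -> e z3 z4 -> e z4 z5 ->
  ~~ e a b -> ~~ e a z1 -> ~~ e a z2 -> ~~ e a z3 -> ~~ e a z4 -> ~~ e a z5 ->
  ~~ e b z1 -> ~~ e b z2 -> ~~ e b z3 -> ~~ e b z4 -> ~~ e b z5 ->
  ~~ e u z2 -> ~~ e u z3 -> ~~ e u z4 -> ~~ e u z5 ->
  ~~ e z1 z3 -> ~~ e z1 z4 -> ~~ e z1 z5 -> ~~ e z2 z4 -> ~~ e z2 z5 -> ~~ e z3 z5 -> False.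
Proof.
move=> ab *; apply: hf.
apply: (@mk_induced 8 _ [:: u; a; b; z1; z2; z3; z4; z5] u
   (fun i j => ((i == 1) && (j == 2)) || ((i == 2) && (j == 1)))) => //.
- move=> i j Hi Hj; rewrite /hn.
  case: i Hi => [|[|[|[|[|[|[|[|i]]]]]]]] Hi //;
  case: j Hj => [|[|[|[|[|[|[|[|j]]]]]]]] Hj // _ /=; simp_rhs; edge_tac.
- by move=> [|[|[|i]]] [|[|[|j]]] //= _; rewrite eq_sym.
Qed.

Lemma noK4 (hf : induced_free e K4) a b c d :
  e a b -> e a c -> e a d -> e b c -> e b d -> e c d -> False.
Proof.
move=> *; apply: hf.
apply: (@mk_induced 4 _ [:: a; b; c; d] a (fun _ _ => false)) => //.
move=> i j Hi Hj; rewrite /hn.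
case: i Hi => [|[|[|[|i]]]] Hi //;
case: j Hj => [|[|[|[|j]]]] Hj // _ /=; simp_rhs; edge_tac.
Qed.

Lemma nodiam (hf : induced_free e diamond) a b c d :
  c != d -> e a b -> e a c -> e a d -> e b c -> e b d -> ~~ e c d -> False.
Proof.
move=> cd *; apply: hf.
apply: (@mk_induced 4 _ [:: a; b; c; d] a
   (fun i j => ((i == 2) && (j == 3)) || ((i == 3) && (j == 2)))) => //.
- move=> i j Hi Hj; rewrite /hn.
  case: i Hi => [|[|[|[|i]]]] Hi //;
  case: j Hj => [|[|[|[|j]]]] Hj // _ /=; simp_rhs; edge_tac.
- by move=> [|[|[|[|i]]]] [|[|[|[|j]]]] //= _; rewrite eq_sym.
Qed.

Lemma nobutt (hf : induced_free e butterfly) a b c d f :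
  e a b -> e a c -> e a d -> e a f -> e b c -> e d f ->
  ~~ e b d -> ~~ e b f -> ~~ e c d -> ~~ e c f -> False.
Proof.
move=> *; apply: hf.
apply: (@mk_induced 5 _ [:: a; b; c; d; f] a (fun _ _ => false)) => //.
move=> i j Hi Hj; rewrite /hn.
case: i Hi => [|[|[|[|[|i]]]]] Hi //;
case: j Hj => [|[|[|[|[|j]]]]] Hj // _ /=; simp_rhs; edge_tac.
Qed.

Lemma common2 (h4 : induced_free e K4) (hd : induced_free e diamond) a b c d :
  c != d -> e a b -> e a c -> e a d -> e b c -> e b d -> False.
Proof.
move=> cd ab ac ad bc bd; case cdE: (e c d).
  exact: (noK4 h4 ab ac ad bc bd cdE).
by apply: (nodiam hd cd ab ac ad bc bd); rewrite cdE.
Qed.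

End G.

Section Layers.
Variables (T : finType) (e : rel T) (e_sym : symmetric e) (x y : T).

Definition dl z k := dist_le e [set x; y] z k.

Lemma dlP z k : reflect (exists p : seq T,
   [/\ size p <= k, path e z p & last z p \in [set x; y]]) (dl z k).
Proof.
apply: (iffP existsP) => [[j /existsP[p /andP[pp lp]]]|[p [sz pp lp]]].
  by exists p; rewrite size_tuple -ltnS ltn_ord.
have sz' : size p < k.+1 by rewrite ltnS.
exists (Ordinal sz'); apply/existsP; exists (in_tuple p); by rewrite pp lp.
Qed.

Lemma dl0 z : dl z 0 = (z \in [set x; y]).
Proof.
apply/dlP/idP => [[p [sz pp lp]]|zS]; last by exists [::].
by case: p sz pp lp.
Qed.

Lemma dl_mono z k k' : k <= k' -> dl z k -> dl z k'.
Proof.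
move=> kk /dlP[p [sz pp lp]]; apply/dlP; exists p; split=> //.
exact: leq_trans kk.
Qed.

Lemma dl_step z w k : e z w -> dl w k -> dl z k.+1.
Proof.
move=> ezw /dlP[p [sz pp lp]]; apply/dlP; exists (w :: p); split=> //=.
by rewrite ezw.
Qed.

Lemma dl_inv z k : dl z k.+1 -> (z \in [set x; y]) \/ exists2 w, e z w & dl w k.
Proof.
case/dlP=> [[|w p] [sz pp lp]]; first by left.
right; exists w; first by case/andP: pp.
apply/dlP; exists p; split=> //; by case/andP: pp.
Qed.

Definition Lay i z := if i is 0 then z \in [set x; y] else z \in Nlayer e x y i.
Local Notation L := Lay.

Lemma L_dl i z : L i z -> dl z i.
Proof. by case: i => [|i] /=; [rewrite dl0 | rewrite /Nlayer inE => /andP[]]. Qed.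

Lemma L_ndl i z k : L i z -> k < i -> ~~ dl z k.
Proof.
case: i => [|i] //= Lz ki; rewrite /Nlayer inE /= in Lz; case/andP: Lz => _ nd.
by apply: contra nd; apply: dl_mono; rewrite -ltnS.
Qed.

Lemma far i j u v : L i u -> L j v -> i.+2 <= j -> ~~ e u v.
Proof.
move=> Lu Lv ij; apply/negP => euv.
have evu : e v u by rewrite e_sym.
have := dl_step evu (L_dl Lu); apply/negP; exact: L_ndl Lv _.
Qed.

Lemma far' i j u v : L i u -> L j v -> j.+2 <= i -> ~~ e u v.
Proof. by move=> Lu Lv ji; rewrite e_sym; apply: far Lv Lu ji. Qed.

Lemma L_neq i j u v : L i u -> L j v -> i != j -> u != v.
Proof.
move=> Lu Lv ij; apply/eqP => uv; subst v.
move: ij; rewrite neq_ltn => /orP[] ij.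
  by move: (L_ndl Lv ij); rewrite (L_dl Lu).
by move: (L_ndl Lu ij); rewrite (L_dl Lv).
Qed.

Lemma down i z : L i.+1 z -> exists2 w, L i w & e z w.
Proof.
move=> Lz; case/dl_inv: (L_dl Lz) => [zS|[w ezw dw]].
  have : dl z i by apply: (dl_mono (leq0n i)); rewrite dl0.
  by move: (L_ndl Lz (ltnSn i)) => /negbTE ->.
exists w => //; case: i Lz dw => [|i] Lz dw; first by rewrite /= -dl0.
rewrite /= /Nlayer inE; apply/andP; split=> //; apply/negP => dw'.
by move: (L_ndl Lz (ltnSn i.+1)); rewrite (dl_step ezw dw').
Qed.

End Layers.

Lemma cardU_le (T : finType) (A B : {set T}) : #|A :|: B| <= #|A| + #|B|.
Proof. by rewrite cardsU leq_subr. Qed.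

Section Main.
Variables (T : finType) (e : rel T) (e_sym : symmetric e) (e_irr : irreflexive e)
  (hS : induced_free e S115) (hK : induced_free e K4)
  (hD : induced_free e diamond) (hB : induced_free e butterfly)
  (x y : T) (hxy : e x y).
Local Notation L := (Lay e x y).
Hypothesis ind2 : forall u v, L 2 u -> L 2 v -> ~~ e u v.

Lemma S_cases z : L 0 z -> z = x \/ z = y.
Proof. by rewrite /= !inE => /orP[]/eqP; [left|right]. Qed.

Lemma S_edge s s' : L 0 s -> L 0 s' -> s != s' -> e s s'.
Proof.
move=> /S_cases[]-> /S_cases[]->; rewrite ?eqxx //; by rewrite // e_sym.
Qed.

Lemma S_other s s' z : L 0 s -> L 0 s' -> s != s' -> L 0 z -> z = s \/ z = s'.
Proof.
move=> /S_cases[]-> /S_cases[]-> ; rewrite ?eqxx // => _ /S_cases[]->; tauto.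
Qed.

Ltac ftac := match goal with
 | H1 : is_true (Lay _ _ _ ?i ?u), H2 : is_true (Lay _ _ _ ?j ?v) |- is_true (~~ _ ?u ?v) =>
    first [exact: (far e_sym H1 H2 isT) | exact: (far' e_sym H1 H2 isT)]
 | H1 : is_true (Lay _ _ _ ?i ?u), H2 : is_true (Lay _ _ _ ?j ?v) |- is_true (?u != ?v) =>
    exact: (L_neq H1 H2 isT)
 end.

Ltac et := solve [done | rewrite e_sym; done | rewrite eq_sym; done].

Section Chain.
Variables (c b p4 p3 p2 : T).
Hypotheses (Lc : L 5 c) (Lb : L 5 b) (L4 : L 4 p4) (L3 : L 3 p3) (L2 : L 2 p2)
  (ebc : e b c) (ebp4 : e b p4) (ncp4 : ~~ e c p4) (e43 : e p4 p3) (e32 : e p3 p2)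
  (uniq3 : forall w, L 2 w -> e p3 w -> w = p2).

Lemma n3 w : L 2 w -> w != p2 -> ~~ e w p3.
Proof.
move=> Lw wp; apply/negP => h; move/eqP: wp; apply; apply: uniq3 => //.
by rewrite e_sym.
Qed.

Ltac gt := solve [ assumption | rewrite e_sym; assumption | ftac
  | by apply: ind2 | by rewrite e_sym; apply: ind2 | by apply: n3
  | by rewrite e_sym; apply: n3 | by apply: S_edge ].

Lemma priv p1 s w : L 1 p1 -> e p1 p2 -> L 0 s -> e p1 s -> L 2 w -> e p1 w -> w = p2.
Proof.
move=> L1 e12 L0 e1s Lw e1w; case: (eqVneq w p2) => // wp2; exfalso.
by apply: (@noS115 T e e_sym e_irr hS p1 s w p2 p3 p4 b c); gt.
Qed.


Lemma caseI v u1 u2 p1 s : L 1 v -> L 2 u1 -> L 2 u2 -> u1 != u2 -> e v u1 -> e v u2 ->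
  L 1 p1 -> e p1 p2 -> L 0 s -> e p1 s -> False.
Proof.
move=> Lv Lu1 Lu2 u12 evu1 evu2 Lp1 e12 Ls e1s.
have [sv Lsv evsv] := down Lv.
have nvp2 : ~~ e v p2.
  apply/negP => evp2; move/eqP: u12; apply.
  by rewrite (priv Lv evp2 Lsv evsv Lu1 evu1) (priv Lv evp2 Lsv evsv Lu2 evu2).
have u1p2 : u1 != p2 by apply: contraNneq nvp2 => <-.
have u2p2 : u2 != p2 by apply: contraNneq nvp2 => <-.
have nu1p1 : ~~ e u1 p1.
  by apply/negP => h; move/eqP: u1p2; apply; apply: (priv Lp1 e12 Ls e1s Lu1); rewrite e_sym.
have nu2p1 : ~~ e u2 p1.
  by apply/negP => h; move/eqP: u2p2; apply; apply: (priv Lp1 e12 Ls e1s Lu2); rewrite e_sym.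
have gamma : forall t, L 0 t -> e p1 t -> e v t -> ~~ e v p1 -> False.
  move=> t Lt e1t evt nvp1.
  by apply: (@noS115 T e e_sym e_irr hS v u1 u2 t p1 p2 p3 p4); gt.
case evp1: (e v p1).
  by apply: (@noS115 T e e_sym e_irr hS v u1 u2 p1 p2 p3 p4 b); gt.
have nvp1 : ~~ e v p1 by rewrite evp1.
case evs: (e v s); first exact: (gamma s).
have nvs : ~~ e v s by rewrite evs.
have svs : sv != s by apply: contraNneq nvs => <-.
case e1sv: (e p1 sv); first exact: (gamma sv).
have n1sv : ~~ e p1 sv by rewrite e1sv.
have esvs : e sv s by apply: S_edge.
by apply: (@noS115 T e e_sym e_irr hS v u1 u2 sv s p1 p2 p3); gt.
Qed.


Section CaseII.
Hypothesis H1 : forall v u u', L 1 v -> L 2 u -> L 2 u' -> e v u -> e v u' -> u = u'.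
Hypothesis hN2c : 5 <= #|Nlayer e x y 2|.
Variables (p1 s s' : T).
Hypotheses (Lp1 : L 1 p1) (e12 : e p1 p2) (Ls : L 0 s) (e1s : e p1 s) (Ls' : L 0 s')
  (ss' : s' != s).

Let W := [set w | L 1 w && ~~ e w p2].

Lemma W_card : 4 <= #|W|.
Proof.
pose f u := odflt u [pick w | L 1 w && e u w].
pose D := Nlayer e x y 2 :\ p2.
have fP u : u \in D -> L 1 (f u) && e u (f u).
  rewrite in_setD1 => /andP[_ Lu]; have [w Lw euw] := down (Lu : L 2 u).
  rewrite /f; case: pickP => [z //|/(_ w)]; by rewrite Lw euw.
have fW : f @: D \subset W.
  apply/subsetP => _ /imsetP[u uD ->]; have /andP[Lf euf] := fP u uD.
  rewrite inE Lf /=; apply/negP => efp2; move: uD; rewrite in_setD1 => /andP[up2 Lu].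
  move/eqP: up2; apply; by apply: (H1 Lf Lu L2); rewrite // e_sym.
have finj : {in D &, injective f}.
  move=> u u' uD u'D fe; have /andP[Lf euf] := fP u uD; have /andP[_ euf'] := fP u' u'D.
  move: uD u'D; rewrite !in_setD1 => /andP[_ Lu] /andP[_ Lu'].
  apply: (H1 Lf Lu Lu'); first by rewrite e_sym.
  by rewrite fe e_sym.
have := subset_leq_card fW; rewrite card_in_imset //.
move: hN2c; rewrite (cardsD1 p2) (_ : p2 \in Nlayer e x y 2 = true) //.
rewrite add1n ltnS => h1 h2; exact: leq_trans h1 h2.
Qed.


Lemma alpha t w : L 0 t -> e p1 t -> w \in W -> e w p1 -> e w t.
Proof.
move=> Lt e1t; rewrite inE => /andP[Lw nwp2] ewp1; case ewt: (e w t) => //; exfalso.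
have nwt : ~~ e w t by rewrite ewt.
have tw : t != w by ftac.
by apply: (@noS115 T e e_sym e_irr hS p1 t w p2 p3 p4 b c); gt.
Qed.

Lemma beta t l1 l2 : L 0 t -> e t p1 -> l1 != l2 -> e t l1 -> e t l2 -> ~~ e l1 l2 ->
  ~~ e l1 p1 -> ~~ e l2 p1 -> ~~ e l1 p2 -> ~~ e l2 p2 -> ~~ e l1 p3 -> ~~ e l2 p3 ->
  ~~ e l1 p4 -> ~~ e l2 p4 -> ~~ e l1 b -> ~~ e l2 b -> False.
Proof.
move=> Lt et1 *.
by apply: (@noS115 T e e_sym e_irr hS t l1 l2 p1 p2 p3 p4 b); gt.
Qed.

Lemma beta' t t' l1 l2 : L 0 t -> L 0 t' -> e t t' -> e t p1 -> ~~ e t' p1 -> L 1 l1 -> L 1 l2 ->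
  l1 != l2 -> e t' l1 -> e t' l2 -> ~~ e l1 l2 -> ~~ e l1 t -> ~~ e l2 t -> ~~ e l1 p1 ->
  ~~ e l2 p1 -> ~~ e l1 p2 -> ~~ e l2 p2 -> False.
Proof.
move=> Lt Lt' ett' et1 nt'1 Ll1 Ll2 *.
by apply: (@noS115 T e e_sym e_irr hS t' l1 l2 t p1 p2 p3 p4); gt.
Qed.

Lemma Wadj w : w \in W -> e w s || e w s'.
Proof.
rewrite inE => /andP[Lw _]; have [t Lt ewt] := down (Lw : L 1 w).
by case: (S_other Ls Ls' _ Lt) => [|<-|<-]; rewrite ?ewt ?orbT // eq_sym.
Qed.

Lemma side t t' : L 0 t -> L 0 t' -> t != t' -> e p1 t -> e p1 t' ->
  1 < #|[set w in W | e w t]| -> False.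
Proof.
move=> Lt Lt' tt' e1t e1t' /card_gt1P[w1 [w2 [hw1 hw2 w12]]].
have ett' : e t t' by apply: S_edge.
have nwp1 w : w \in W -> ~~ e w p1.
  move=> wW; apply/negP => ewp1.
  have := alpha Lt e1t wW ewp1; have := alpha Lt' e1t' wW ewp1.
  move: wW; rewrite inE => /andP[Lw nwp2] ewt' ewt.
  by apply: (@noK4 T e e_sym e_irr hK t t' p1 w); rewrite // e_sym.
have nwt' w : w \in W -> e w t -> ~~ e w t'.
  move=> wW ewt; apply/negP => ewt'.
  have p1w : p1 != w by apply: contraTneq wW => <-; rewrite inE e12 andbF.
  by apply: (@common2 T e e_sym e_irr hK hD t t' p1 w); rewrite // e_sym.
move: hw1 hw2; rewrite !inE -!andbA => /and3P[Lw1 n1 ew1t] /and3P[Lw2 n2 ew2t].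
have w1W : w1 \in W by rewrite inE Lw1.
have w2W : w2 \in W by rewrite inE Lw2.
have := nwp1 _ w1W; have := nwp1 _ w2W; have := nwt' _ w1W ew1t; have := nwt' _ w2W ew2t.
move=> nw2t' nw1t' nw2p1 nw1p1.
case ew12: (e w1 w2).
  by apply: (@nobutt T e e_sym e_irr hB t t' p1 w1 w2); rewrite // e_sym.
have nw12 : ~~ e w1 w2 by rewrite ew12.
by apply: (beta Lt _ w12); gt.
Qed.

Lemma both : e p1 s' -> False.
Proof.
move=> e1s'.
have sub : W \subset [set w in W | e w s] :|: [set w in W | e w s'].
  apply/subsetP => w wW; rewrite !inE; have := Wadj wW; rewrite inE in wW.
  by case/andP: wW => -> -> /=.
have := leq_trans W_card (leq_trans (subset_leq_card sub) (cardU_le _ _)).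
have ss2 : s != s' by rewrite eq_sym.
case: (ltnP 1 #|[set w in W | e w s]|) => [h|h1].
  by move=> _; apply: (side Ls Ls' ss2 e1s e1s' h).
case: (ltnP 1 #|[set w in W | e w s']|) => [h|h2].
  by move=> _; apply: (side Ls' Ls ss' e1s' e1s h).
by move=> h; move: (leq_trans h (leq_add h1 h2)).
Qed.



Lemma one : ~~ e p1 s' -> False.
Proof.
move=> n1s'.
have ss2 : s != s' by rewrite eq_sym.
have ess' : e s s' by apply: S_edge.
have es1 : e s p1 by rewrite e_sym.
have betas w : w \in W -> e w s -> ~~ e w s' -> e w p1.
  move=> wW ews nws'; case ew1: (e w p1) => //; exfalso.
  have nw1 : ~~ e w p1 by rewrite ew1.
  move: wW; rewrite inE => /andP[Lw nwp2].
  have s'w : s' != w by ftac.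
  by apply: (beta Ls es1 s'w); gt.
pose Wp := [set w in W | e w p1].
pose Wc := [set w in W | e w s && e w s'].
pose Wo := [set w in W | e w s' && ~~ e w s].
have sub : W \subset Wp :|: Wc :|: Wo.
  apply/subsetP => w wW; move: (wW); rewrite inE => /andP[Lw nw]; rewrite !inE Lw nw /=.
  case ews: (e w s); case ews': (e w s') => //=; rewrite ?orbT //.
  all: try (by rewrite betas // ews').
  by have := Wadj wW; rewrite ews ews'.
have cp : #|Wp| <= 1.
  apply/card_le1_eqP => w w'; rewrite !inE -!andbA => /and3P[Lw nw ew] /and3P[Lw' nw' ew'].
  apply/eqP; apply: contraT => ww'.
  have ews : e w s by apply: (alpha Ls e1s); rewrite // inE Lw.
  have ews' : e w' s by apply: (alpha Ls e1s); rewrite // inE Lw'.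
  by exfalso; apply: (@common2 T e e_sym e_irr hK hD s p1 w w'); et.
have cc : #|Wc| <= 1.
  apply/card_le1_eqP => w w'; rewrite !inE -!andbA => /and4P[Lw nw ews ews'] /and4P[Lw' nw' ew's ew's'].
  apply/eqP; apply: contraT => ww'.
  by exfalso; apply: (@common2 T e e_sym e_irr hK hD s s' w w'); et.
have oP w : w \in Wo -> [/\ L 1 w, ~~ e w p2, e w s', ~~ e w s & ~~ e w p1].
  rewrite !inE -!andbA => /and4P[Lw nw ews' nws]; split=> //.
  apply/negP => ew1; have := alpha Ls e1s _ ew1; rewrite inE Lw nw (negbTE nws).
  by move=> /(_ isT).
have oadj w w' : w \in Wo -> w' \in Wo -> w != w' -> e w w'.
  move=> /oP[Lw nw ews' nws nw1] /oP[Lw' nw' ew's' nw's nw'1] ww'.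
  case eww: (e w w') => //; exfalso.
  have neww : ~~ e w w' by rewrite eww.
  by apply: (beta' Ls Ls' ess' es1 _ Lw Lw' ww'); et.
have tot := leq_trans W_card (leq_trans (subset_leq_card sub)
   (leq_trans (cardU_le _ _) (leq_add (cardU_le _ _) (leqnn _)))).
case: (ltnP 2 #|Wo|) => [/card_gt2P[w1 [w2 [w3 [[h1 h2 h3] [n12 n23 n31]]]]]|le2].
  have [Lw1 _ e1 _ _] := oP _ h1; have [Lw2 _ e2 _ _] := oP _ h2; have [Lw3 _ e3 _ _] := oP _ h3.
  have a12 := oadj _ _ h1 h2 n12; have a23 := oadj _ _ h2 h3 n23.
  have a13 : e w1 w3 by apply: oadj; rewrite // eq_sym.
  by apply: (@noK4 T e e_sym e_irr hK s' w1 w2 w3); et.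
have : 0 < #|Wc|.
  rewrite lt0n; apply/negP => /eqP c0; move: tot; rewrite c0 addn0.
  by move=> h; move: (leq_trans h (leq_add cp le2)).
case/card_gt0P => c0 hc0.
have : 1 < #|Wo|.
  move: tot => h; rewrite ltnNge; apply/negP => h'.
  by move: (leq_trans h (leq_add (leq_add cp cc) h')).
case/card_gt1P => w1 [w2 [h1 h2 n12]].
have [Lw1 _ e1 n1 _] := oP _ h1; have [Lw2 _ e2 n2 _] := oP _ h2.
have a12 := oadj _ _ h1 h2 n12.
move: hc0; rewrite !inE -!andbA => /and4P[Lc0 _ ec0s ec0s'].
have nc0 w : Lay e x y 1 w -> e w s' -> ~~ e w s -> ~~ e c0 w.
  move=> Lw ews' nws; apply/negP => ec0w.
  have sw : s != w by ftac.
  by apply: (@common2 T e e_sym e_irr hK hD s' c0 s w); et.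
apply: (@nobutt T e e_sym e_irr hB s' s c0 w1 w2); try et.
- exact: nc0.
- exact: nc0.
Qed.

End CaseII.

End Chain.

Hypothesis hN3u : forall z w w', L 3 z -> L 2 w -> L 2 w' -> e z w -> e z w' -> w = w'.
Hypothesis hN2c : 5 <= #|Nlayer e x y 2|.

Lemma chain_false c b p4 : L 5 c -> L 5 b -> L 4 p4 -> e b c -> e b p4 -> ~~ e c p4 -> False.
Proof.
move=> Lc Lb L4 ebc ebp4 ncp4.
have [p3 L3 e43] := down L4.
have [p2 L2 e32] := down L3.
have uniq3 w : L 2 w -> e p3 w -> w = p2 by move=> Lw e3w; apply: (hN3u L3 Lw L2).
have [p1 Lp1 e21] := down L2.
have e12 : e p1 p2 by rewrite e_sym.
have [s Ls e1s] := down Lp1.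
case: (boolP [exists v, exists u, exists u', [&& L 1 v, L 2 u, L 2 u', u != u', e v u & e v u']]).
  case/existsP => v /existsP[u /existsP[u' /and5P[Lv Lu Lu' uu' /andP[evu evu']]]].
  exact: (caseI Lc Lb L4 L3 L2 ebc ebp4 ncp4 e43 e32 uniq3 Lv Lu Lu' uu' evu evu' Lp1 e12 Ls e1s).
move=> hn.
have H1 v u u' : L 1 v -> L 2 u -> L 2 u' -> e v u -> e v u' -> u = u'.
  move=> Lv Lu Lu' evu evu'; apply/eqP; apply: contraNT hn => uu'.
  apply/existsP; exists v; apply/existsP; exists u; apply/existsP; exists u'.
  by rewrite Lv Lu Lu' uu' evu evu'.
pose s' := if s == x then y else x.
have xy : x != y by apply: contraTneq hxy => ->; rewrite e_irr.
have Ls' : L 0 s' by rewrite /s'; case: ifP; rewrite /= !inE eqxx ?orbT.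
have ss' : s' != s.
  rewrite /s'; case: ifP => [/eqP->|]; first by rewrite eq_sym.
  by case: (S_cases Ls) => ->; rewrite ?eqxx.
case e1s': (e p1 s').
  exact: (both Lc Lb L4 L3 L2 ebc ebp4 ncp4 e43 e32 H1 hN2c Lp1 e12 Ls e1s Ls' ss' e1s').
have n1s' : ~~ e p1 s' by rewrite e1s'.
exact: (one Lc Lb L4 L3 L2 ebc ebp4 ncp4 e43 e32 H1 hN2c Lp1 e12 Ls e1s Ls' ss' n1s').
Qed.

End Main.

Theorem lemma28 (T : finType) (e : rel T)
  (e_sym : symmetric e) (e_irr : irreflexive e)
  (hS115 : induced_free e S115) (hK4 : induced_free e K4)
  (hdiam : induced_free e diamond) (hbutt : induced_free e butterfly)
  (x y r : T) (hxy : e x y) (hrx : e r x) (hry : ~~ e r y) (hr : r != y)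
  (hN2ind : forall u v, u \in Nlayer e x y 2 -> v \in Nlayer e x y 2 -> ~~ e u v)
  (hN3 : forall z, z \in Nlayer e x y 3 ->
           #|[set w in Nlayer e x y 2 | e z w]| = 1)
  (hN2card : 5 <= #|Nlayer e x y 2|)
  (hN5 : Nlayer e x y 5 != set0) :
  (~ exists a b c,
       [/\ a \in Nlayer e x y 5, b \in Nlayer e x y 5 & c \in Nlayer e x y 5] /\
       [/\ a != c, e a b, e b c & ~~ e a c]) /\
  (~ exists a b c,
       [/\ a \in Nlayer e x y 5, b \in Nlayer e x y 5 & c \in Nlayer e x y 5] /\
       [/\ e a b, e b c & e a c]).
Proof.
have ind2 u v : Lay e x y 2 u -> Lay e x y 2 v -> ~~ e u v by exact: hN2ind.
have hN3u z w w' : Lay e x y 3 z -> Lay e x y 2 w -> Lay e x y 2 w' -> e z w -> e z w' -> w = w'.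
  move=> Lz Lw Lw' ezw ezw'.
  have h1 : #|[set w in Nlayer e x y 2 | e z w]| <= 1 by rewrite hN3.
  move/card_le1_eqP: h1 => h1; apply: h1.
  - by rewrite inE; apply/andP.
  - by rewrite inE; apply/andP.
have CF := chain_false e_sym e_irr hS115 hK4 hdiam hbutt hxy ind2 hN3u hN2card.
split.
- case=> a [b [c [[La Lb Lc] [ac eab ebc nac]]]].
  have [p4 L4 ebp4] := down (Lb : Lay e x y 5 b).
  case ecp4: (e c p4); last by apply: (CF c b p4); rewrite ?ecp4.
  case eap4: (e a p4); last by apply: (CF a b p4); rewrite ?eap4 // e_sym.
  by apply: (nodiam e_sym e_irr hdiam ac ebp4); rewrite // e_sym.
- case=> a [b [c [[La Lb Lc] [eab ebc eac]]]].
  have [p4 L4 eap4] := down (La : Lay e x y 5 a).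
  case ebp4: (e b p4); last by apply: (CF b a p4); rewrite ?ebp4.
  case ecp4: (e c p4); last by apply: (CF c a p4); rewrite ?ecp4.
  by apply: (noK4 e_sym e_irr hK4 eab eac eap4 ebc ebp4 ecp4).
Qed.
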